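(* Let $X_1,X_2,\dots$ be i.i.d. $\mathbb{Z}$-valued random variables and $S_n=\sum_{j=1}^nX_j$. For every $N\in\mathbb{N}\setminus\{1\}$ and all $y_1,\dots,y_N\in\mathbb{Z}$ with $|y_n-y_{n+1}|\le1$ for $n=1,\dots,N-1$, $$\frac{1}{\sum_{i=0}^{N-1}p^{(N)}_i}\le\mathbb{P}^{(N)}_{\mathcal{R}}\Big(\bigcup_{n=1}^N\{\mathcal{R}^{(N)}_n=(y_n\bmod N)\}\Big)\le\frac{2}{\sum_{i=0}^{N-1}q^{(N)}_i},$$ where $p^{(N)}_0=q^{(N)}_0=1$ and, for $i\in\mathbb{N}$, $p^{(N)}_i=\max_{y\in\mathbb{Z},|y|\le i}P\{S_i\in[y]_N\}$, $q^{(N)}_i=\min_{y\in\mathbb{Z},|y|\le i}P\{S_i\in[y]_N\}$.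
   Context: $X_j$ live on $(\Omega,\mathcal{F},P)$. $[y]_N=\{y+kN:k\in\mathbb{Z}\}$. For $N\in\mathbb{N}$, $X^{(N)}_0$ is uniform on $\{0,\dots,N-1\}$ under $(\Omega_N,\mathcal{F}_N,\mu_N)$; $(b\bmod N)$ is the remainder of $b\in\mathbb{Z}$ divided by $N$; $\mathcal{R}^{(N)}_n=(X^{(N)}_0+S_n\bmod N)$; $\mathbb{P}^{(N)}_{\mathcal{R}}=\mu_N\times P$ (product measure). *)

(* Defs.v *)
From HB Require Import structures.
From mathcomp Require Import all_boot all_order all_algebra.
From mathcomp Require Import all_classical all_reals all_analysis.
Set Implicit Arguments. Unset Strict Implicit. Unset Printing Implicit Defensive.
Import Order.TTheory GRing.Theory Num.Theory.
Local Open Scope classical_set_scope.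
Local Open Scope ring_scope.

Section Defs.
Context (d : measure_display) (T : measurableType d) (R : realType).

Definition pr (P : probability T R) (A : set T) : R := fine (P A).

(* Z-valued random variables; here X j stands
   for X_{j+1}.  Since Z is discrete, measurability means every level set
   is measurable, and (mutual) independence means the product rule for
   every finite family of level sets. *)
Definition iid_int (P : probability T R) (X : nat -> T -> int) : Prop :=
  [/\ (forall j (k : int), measurable [set w | X j w = k]),
      (forall j (k : int), P [set w | X j w = k] = P [set w | X 0%N w = k]) &
      (forall (J : seq nat) (k : nat -> int), uniq J ->
         P [set w | forall j, j \in J -> X j w = k j]
         = \big[*%E/1%E]_(j <- J) P [set w | X j w = k j])].

Definition Ssum (X : nat -> T -> int) (n : nat) (w : T) : int :=
  \sum_(j < n) X j w.

Definition rclass (N : nat) (y : int) : set int :=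
  [set z | exists k : int, z = y + k * N%:Z].

Definition pN (P : probability T R) (X : nat -> T -> int) (N i : nat) : R :=
  if i == 0%N then 1 else
  sup [set pr P [set w | rclass N y (Ssum X i w)] | y in [set y : int | `|y| <= i%:Z]].

Definition qN (P : probability T R) (X : nat -> T -> int) (N i : nat) : R :=
  if i == 0%N then 1 else
  inf [set pr P [set w | rclass N y (Ssum X i w)] | y in [set y : int | `|y| <= i%:Z]].

(* P^(N)_R = mu_N x P, with mu_N uniform on {0,...,N-1} (X_0^(N) = identity
   on Omega_N = 'I_N); for an event E of Omega_N x Omega its value is
   (1/N) sum_x P(section of E at x). *)
Definition PR (P : probability T R) (N : nat) (E : set ('I_N * T)) : R :=
  N%:R^-1 * \sum_(x < N) pr P [set w | E (x, w)].

Definition Rn (X : nat -> T -> int) (N n : nat) (xw : 'I_N * T) : int :=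
  (((xw.1 : nat)%:Z + Ssum X n xw.2) %% N%:Z)%Z.

End Defs.

(* Main.v *)
Require Import Defs.
From HB Require Import structures.
From mathcomp Require Import all_boot all_order all_algebra.
From mathcomp Require Import all_classical all_reals all_analysis.
From mathcomp Require Import ring lra zify.
Import Order.TTheory GRing.Theory Num.Theory.
Local Open Scope classical_set_scope.
Local Open Scope ring_scope.
Set Implicit Arguments. Unset Strict Implicit. Unset Printing Implicit Defensive.

Section Sig.
Context d (T : measurableType d) (R : realType) (P : probability T R).

Definition unpk (F : int -> set T) (n : nat) : set T :=
  if pickle_inv n is Some k then F k else set0.

Lemma bigcup_unpk F : \bigcup_k F k = \bigcup_n unpk F n.
Proof.
apply/seteqP; split => w /=.
  by move=> [k _ Fkw]; exists (pickle k) => //; rewrite /unpk pickleK_inv.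
move=> [n _]; rewrite /unpk; case: (pickle_inv n) => [k|]//= Fkw.
by exists k.
Qed.

Lemma triv_unpk F : trivIset setT F -> trivIset setT (unpk F).
Proof.
move=> tF n m _ _; rewrite /unpk.
have := @pickle_invK int n; have := @pickle_invK int m.
case: (pickle_inv n) => [k|]; last by rewrite set0I => _ _ -[].
case: (pickle_inv m) => [k'|]; last by rewrite setI0 => _ _ -[].
by move=> /= <- <- /(tF k k' I I) ->.
Qed.

Lemma sig_int (F G : int -> set T) (c : R) :
  (forall k, measurable (F k)) -> (forall k, measurable (G k)) ->
  trivIset setT F -> trivIset setT G ->
  (forall k, P (F k) = c%:E * P (G k))%E ->
  (P (\bigcup_k F k) = c%:E * P (\bigcup_k G k))%E.
Proof.
move=> mF mG tF tG FG.
have mU (H : int -> set T) : (forall k, measurable (H k)) -> forall n, setT n -> measurable (unpk H n).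
  by move=> mH n _; rewrite /unpk; case: pickle_inv.
rewrite !bigcup_unpk !measure_bigcup //; [|exact: mU|exact: triv_unpk|exact: mU|exact: triv_unpk].
rewrite -nneseriesZl; last by move=> i _; exact: measure_ge0.
apply: eq_eseriesr => n _; rewrite /unpk; case: pickle_inv => //.
by rewrite measure0 mule0.
Qed.
End Sig.

Section Meas.
Context d (T : measurableType d) (R : realType) (P : probability T R).
Context (X : nat -> T -> int).
Hypothesis mX : forall j (k : int), measurable [set w | X j w = k].
Hypothesis hprod : forall (J : seq nat) (k : nat -> int), uniq J ->
         P [set w | forall j, j \in J -> X j w = k j]
         = \big[*%E/1%E]_(j <- J) P [set w | X j w = k j].

Lemma PE (A : set T) : measurable A -> P A = (pr P A)%:E.
Proof. by move=> mA; rewrite /pr fineK // fin_num_measure. Qed.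

Lemma meas_iunion (F : int -> set T) : (forall k, measurable (F k)) ->
  measurable (\bigcup_k F k).
Proof.
move=> mF; rewrite bigcup_unpk; apply: bigcupT_measurable => n.
by rewrite /unpk; case: pickle_inv.
Qed.

Definition cset (Q : Prop) : set T := [set _ | Q].

Lemma meas_cset Q : measurable (cset Q).
Proof.
rewrite /cset; case: (pselect Q) => q.
  by have -> : [set _ : T | Q] = setT by apply/seteqP; split.
by have -> : [set _ : T | Q] = set0 by apply/seteqP; split.
Qed.

Lemma meas_in j (A : set int) : measurable [set w | A (X j w)].
Proof.
have -> : [set w | A (X j w)] = \bigcup_k ([set w | X j w = k] `&` cset (A k)).
  apply/seteqP; split => w /=; first by move=> Aw; exists (X j w).
  by move=> [k _ [/= -> ]].
by apply: meas_iunion => k; apply: measurableI => //; exact: meas_cset.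
Qed.

Lemma meas_all (L : seq nat) (Q : nat -> set T) : (forall j, measurable (Q j)) ->
  measurable [set w | forall j, j \in L -> Q j w].
Proof.
move=> mQ; elim: L => [|j L IH].
  by have -> : [set w : T | forall j, j \in [::] -> Q j w] = setT by apply/seteqP; split.
have -> : [set w | forall i, i \in j :: L -> Q i w] = Q j `&` [set w | forall i, i \in L -> Q i w].
  apply/seteqP; split => w /=.
    by move=> H; split => [|i iL]; apply: H; rewrite inE ?eqxx ?iL ?orbT.
  by move=> [Qj H] i; rewrite inE => /orP [/eqP ->|/H].
exact: measurableI.
Qed.

Lemma ind_gen (L1 L2 : seq nat) (A : nat -> set int) (k : nat -> int) :
  uniq (L1 ++ L2) ->
  P [set w | (forall j, j \in L1 -> A j (X j w)) /\ (forall j, j \in L2 -> X j w = k j)]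
  = ((\prod_(j <- L1) pr P [set w | A j (X j w)]) *
     \prod_(j <- L2) pr P [set w | X j w = k j])%:E.
Proof.
elim: L1 L2 k => [|j L1 IH] L2 k /=.
  move=> u; rewrite big_nil mul1r -prodEFin.
  rewrite (eq_bigr (fun j => P [set w | X j w = k j])); last by move=> i _; rewrite -PE.
  rewrite -hprod //; congr (P _); apply/seteqP; split => w /=; first by case.
  by move=> H; split.
rewrite mem_cat negb_or => /andP[/andP[jL1 jL2] u].
pose c := (\prod_(j <- L1) pr P [set w | A j (X j w)]) *
     \prod_(j <- L2) pr P [set w | X j w = k j].
pose F a := [set w | (forall i, i \in L1 -> A i (X i w)) /\
   (forall i, i \in j :: L2 -> X i w = (fun i => if i == j then a else k i) i)] `&` cset (A j a).
pose G a := [set w | X j w = a] `&` cset (A j a).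
have mS (a : int) : measurable [set w | (forall i, i \in L1 -> A i (X i w)) /\
   (forall i, i \in j :: L2 -> X i w = (fun i => if i == j then a else k i) i)].
  have -> : [set w | (forall i, i \in L1 -> A i (X i w)) /\
   (forall i, i \in j :: L2 -> X i w = (fun i => if i == j then a else k i) i)] =
   [set w | forall i, i \in L1 -> A i (X i w)] `&`
   [set w | forall i, i \in j :: L2 -> [set w | X i w = (fun i => if i == j then a else k i) i] w].
    by apply/seteqP; split => w /=.
  by apply: measurableI; apply: meas_all => i; [exact: meas_in|exact: mX].
have eS : [set w | (forall i, i \in j :: L1 -> A i (X i w)) /\ (forall i, i \in L2 -> X i w = k i)]
   = \bigcup_a F a.
  apply/seteqP; split => w /=.
    move=> [HA Hk]; exists (X j w) => //; split; last by apply: HA; rewrite inE eqxx.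
    split; first by move=> i iL; apply: HA; rewrite inE iL orbT.
    move=> i; rewrite inE; case: eqP => [->//|_] /= /Hk //.
  move=> [a _ [[HA Hk] Aa]]; split.
    move=> i; rewrite inE => /orP[/eqP ->|/HA //].
    by have := Hk j; rewrite inE !eqxx /= => ->.
  move=> i iL2; have := Hk i; rewrite inE iL2 orbT => /(_ isT).
  by case: eqP => // ei; move: jL2; rewrite -ei iL2.
have eG : [set w | A j (X j w)] = \bigcup_a G a.
  apply/seteqP; split => w /=; first by move=> h; exists (X j w).
  by move=> [a _ [/= -> ]].
rewrite eS (@sig_int _ _ _ P F G c).
- rewrite -eG (PE (meas_in _ _)) //= -EFinM; congr (_%:E).
  by rewrite big_cons /c; ring.
- by move=> a; apply: measurableI => //; exact: meas_cset.
- by move=> a; apply: measurableI => //; exact: meas_cset.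
- move=> a b _ _ [w [[[_ H1] _] [[_ H2] _]]].
  by move: (H1 j (mem_head _ _)) (H2 j (mem_head _ _)); rewrite eqxx => <-.
- by move=> a b _ _ [w [[/= <- _] [/= <- _]]].
- move=> a; rewrite /F /G; case: (pselect (A j a)) => Aa.
    have -> : cset (A j a) = setT by apply/seteqP; split.
    rewrite !setIT IH /=; last by rewrite -cat1s uniq_catCA cat1s /= mem_cat negb_or jL1 jL2 u.
    rewrite PE // -EFinM; congr (_%:E).
    rewrite big_cons eqxx /c.
    have -> : \prod_(j0 <- L2) pr P [set w | X j0 w = (if j0 == j then a else k j0)]
       = \prod_(j0 <- L2) pr P [set w | X j0 w = k j0].
      apply: eq_big_seq => i iL2; case: eqP => // ei.
      by move: jL2; rewrite -ei iL2.
    by rewrite mulrA mulrAC.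
  have -> : cset (A j a) = set0 by apply/seteqP; split.
  by rewrite !setI0 measure0 mule0.
Qed.
End Meas.

Lemma mem_bigU (T : Type) n (S : 'I_n -> set T) w :
  (\big[setU/set0]_(i < n) S i) w <-> exists i, S i w.
Proof.
split.
  by elim/big_rec: _ => [//|i A _ IH [Siw|Aw]]; [exists i | exact: IH].
by move=> [i Siw]; rewrite (bigD1 i) //=; left.
Qed.

Lemma pr_bigU d (T : measurableType d) (R : realType) (P : probability T R)
  n (S : 'I_n -> set T) :
  (forall i, measurable (S i)) -> trivIset setT S ->
  pr P (\big[setU/set0]_(i < n) S i) = \sum_(i < n) pr P (S i).
Proof.
move=> mS tS; rewrite {1}/pr measure_bigsetU_ord //.
rewrite (eq_bigr (fun i => (pr P (S i))%:E)); last by move=> i _; rewrite -PE.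
by rewrite sumEFin.
Qed.

Lemma pr_ge0 d (T : measurableType d) (R : realType) (P : probability T R) A :
  0 <= pr P A.
Proof. by rewrite /pr fine_ge0 // measure_ge0. Qed.

Lemma pr_le1 d (T : measurableType d) (R : realType) (P : probability T R) A :
  measurable A -> pr P A <= 1.
Proof. by move=> mA; rewrite /pr -lee_fin (PE P mA) /= -/(pr P A) -PE // probability_le1. Qed.

Close Scope classical_set_scope.

Definition scons (a : int) (f : nat -> int) : nat -> int :=
  fun n => if n is n'.+1 then f n' else a.
Definition app (K : nat) (f1 f2 : nat -> int) : nat -> int :=
  fun j => if (j < K)%N then f1 j else f2 (j - K)%N.
Definition dep (K : nat) (R : Type) (G : (nat -> int) -> R) :=
  forall f g, (forall j, (j < K)%N -> f j = g j) -> G f = G g.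

Section ExSec.
Context (R : realType) (N : nat) (mu : int -> R).
Hypothesis mu0 : forall a : 'I_N, 0 <= mu a.
Hypothesis mu1 : \sum_(a < N) mu a = 1.

Fixpoint Ex (K : nat) (G : (nat -> int) -> R) : R :=
  if K is K'.+1 then \sum_(a < N) mu a * Ex K' (fun f => G (scons a f))
  else G (fun _ => 0).

Lemma Ex_ext K G1 G2 : (forall f, G1 f = G2 f) -> Ex K G1 = Ex K G2.
Proof. by move=> h; have -> : G1 = G2 by apply: funext. Qed.

Lemma ExD K G1 G2 : Ex K (fun f => G1 f + G2 f) = Ex K G1 + Ex K G2.
Proof.
elim: K G1 G2 => [//|K IH] G1 G2 /=.
by rewrite -big_split; apply: eq_bigr => a _; rewrite IH mulrDr.
Qed.

Lemma ExZ K c G : Ex K (fun f => c * G f) = c * Ex K G.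
Proof.
elim: K G => [//|K IH] G /=.
by rewrite mulr_sumr; apply: eq_bigr => a _; rewrite IH mulrCA.
Qed.

Lemma Ex_const K c : Ex K (fun _ => c) = c.
Proof.
elim: K => [//|K IH] /=.
by rewrite IH -mulr_suml mu1 mul1r.
Qed.

Lemma Ex_ge0 K G : (forall f, 0 <= G f) -> 0 <= Ex K G.
Proof.
elim: K G => [|K IH] G h /=; first exact: h.
by apply: sumr_ge0 => a _; apply: mulr_ge0 => //; apply: IH.
Qed.

Lemma Ex_le K G1 G2 : (forall f, G1 f <= G2 f) -> Ex K G1 <= Ex K G2.
Proof.
move=> h; rewrite -subr_ge0.
have -> : Ex K G2 - Ex K G1 = Ex K (fun f => G2 f + (-1) * G1 f).
  by rewrite ExD ExZ mulN1r.
by apply: Ex_ge0 => f; rewrite mulN1r subr_ge0.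
Qed.

Lemma Ex_sum K (I : finType) (G : I -> (nat -> int) -> R) :
  Ex K (fun f => \sum_(i : I) G i f) = \sum_(i : I) Ex K (G i).
Proof.
elim: K G => [//|K IH] G /=.
rewrite exchange_big /=; apply: eq_bigr => a _.
by rewrite IH mulr_sumr.
Qed.

Lemma Ex_sum_seq K (I : Type) (r : seq I) (G : I -> (nat -> int) -> R) :
  Ex K (fun f => \sum_(i <- r) G i f) = \sum_(i <- r) Ex K (G i).
Proof.
elim: K G => [//|K IH] G /=.
rewrite exchange_big /=; apply: eq_bigr => a _.
by rewrite IH mulr_sumr.
Qed.

Lemma Ex_split K1 K2 G :
  Ex (K1 + K2) G = Ex K1 (fun f1 => Ex K2 (fun f2 => G (app K1 f1 f2))).
Proof.
elim: K1 G => [|K1 IH] G /=.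
  apply: Ex_ext => f; congr G; apply: funext => j.
  by rewrite /app ltn0 subn0.
apply: eq_bigr => a _; rewrite IH; congr (_ * _).
apply: Ex_ext => f1; apply: Ex_ext => f2; congr G; apply: funext => j.
by case: j => [|j] //=; rewrite /app /= ltnS subSS.
Qed.

Lemma Ex_dep K K' G : dep K' G -> (K' <= K)%N -> Ex K G = Ex K' G.
Proof.
move=> dG le; rewrite -(subnKC le) Ex_split; apply: Ex_ext => f1.
rewrite -[RHS](Ex_const (K - K') (G f1)); apply: Ex_ext => f2.
by apply: dG => j jK; rewrite /app jK.
Qed.

Definition setk (K : nat) (a : int) (f : nat -> int) : nat -> int :=
  fun j => if j == K then a else f j.

Lemma Ex_last K G : dep K.+1 G ->
  Ex K.+1 G = \sum_(a < N) mu a * Ex K (fun f => G (setk K a f)).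
Proof.
move=> dG; rewrite -addn1 Ex_split /=.
under [RHS]eq_bigr do rewrite -ExZ.
rewrite -Ex_sum; apply: Ex_ext => f; apply: eq_bigr => a _; congr (_ * _).
apply: dG => j; rewrite ltnS leq_eqVlt /app /setk => /orP[/eqP ->|jK].
  by rewrite ltnn subnn eqxx.
by rewrite jK (ltn_eqF jK).
Qed.
End ExSec.

Definition Ssm (k : nat) (f : nat -> int) : int := \sum_(j < k) f j.

Lemma Ssm_app K1 f1 f2 k : (K1 <= k)%N ->
  Ssm k (app K1 f1 f2) = Ssm K1 f1 + Ssm (k - K1) f2.
Proof.
move=> le; rewrite /Ssm -!(big_mkord xpredT) (big_cat_nat (n := K1)) //=.
congr (_ + _).
  by apply: eq_big_nat => j /andP[_ jK]; rewrite /app jK.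
rewrite -{1}[K1]add0n big_addn; apply: eq_big_nat => j _.
by rewrite /app ltnNge leq_addl /= addnK.
Qed.

Lemma Ssm_le K1 f1 f2 k : (k <= K1)%N -> Ssm k (app K1 f1 f2) = Ssm k f1.
Proof.
move=> le; rewrite /Ssm; apply: eq_bigr => j _.
by rewrite /app (leq_trans (ltn_ord j) le).
Qed.

Lemma dep_Ssm k : dep k (Ssm k).
Proof. by move=> f g h; rewrite /Ssm; apply: eq_bigr => j _; rewrite h. Qed.

Lemma dep_mono k m (T : Type) (G : (nat -> int) -> T) : dep k G -> (k <= m)%N -> dep m G.
Proof. by move=> dG le f g h; apply: dG => j jk; apply: h; exact: leq_trans jk le. Qed.

Section Gen.
Context (R : comRingType).

Lemma tel_first (u : nat -> R) lo hi : (lo <= hi)%N ->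
  \sum_(lo <= m < hi) (1 - u m) * \prod_(lo <= k < m) u k = 1 - \prod_(lo <= k < hi) u k.
Proof.
elim: hi => [|hi IH].
  by rewrite leqn0 => /eqP ->; rewrite !big_geq // subrr.
rewrite leq_eqVlt => /orP[/eqP ->|]; first by rewrite !big_geq // subrr.
rewrite ltnS => le; rewrite !big_nat_recr //= IH //; ring.
Qed.

Lemma tel_last (u : nat -> R) lo hi : (lo <= hi)%N ->
  \sum_(lo <= m < hi) (1 - u m) * \prod_(m.+1 <= k < hi) u k = 1 - \prod_(lo <= k < hi) u k.
Proof.
elim: hi => [|hi IH].
  by rewrite leqn0 => /eqP ->; rewrite !big_geq // subrr.
rewrite leq_eqVlt => /orP[/eqP ->|]; first by rewrite !big_geq // subrr.
rewrite ltnS => le; rewrite big_nat_recr //= [X in _ = 1 - X]big_nat_recr //=.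
rewrite (big_geq (leqnn _)) mulr1.
have -> : \sum_(lo <= i < hi) (1 - u i) * \prod_(i.+1 <= k < hi.+1) u k =
          (\sum_(lo <= i < hi) (1 - u i) * \prod_(i.+1 <= k < hi) u k) * u hi.
  rewrite mulr_suml; apply: eq_big_nat => i /andP[_ ih].
  by rewrite big_nat_recr //= mulrA.
rewrite IH //; ring.
Qed.

Lemma tri (F : nat -> nat -> R) n :
  \sum_(0 <= m < n) \sum_(0 <= i < m) F i m = \sum_(0 <= i < n) \sum_(i.+1 <= m < n) F i m.
Proof.
elim: n => [|n IH]; first by rewrite !big_geq.
rewrite big_nat_recr //= IH [in RHS]big_nat_recr //= (big_geq (leqnn _)) addr0.
rewrite -big_split /=; apply: eq_big_nat => i /andP[_ iN].
by rewrite big_nat_recr.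
Qed.

Lemma sum_rev (q : nat -> R) m :
  \sum_(1 <= n < m.+1) q (m - n)%N = \sum_(i < m) q i.
Proof.
elim: m => [|m IH]; first by rewrite big_geq // big_ord0.
rewrite big_ltn // subn1 /= big_ord_recr /= addrC; congr (_ + _).
by rewrite -IH big_add1 /=; apply: eq_big_nat => i _; rewrite subSS.
Qed.

Lemma sum_tail (F : nat -> R) m N : (1 <= m <= N.+1)%N ->
  \sum_(1 <= n < N.+1) (if (m <= n)%N then F n else 0) = \sum_(i < N.+1 - m) F (i + m)%N.
Proof.
move=> /andP[m1 mN]; rewrite (big_cat_nat (n := m)) //=.
rewrite big1_seq ?add0r; last first.
  by move=> i /andP[_]; rewrite mem_index_iota => /andP[_]; rewrite ltnNge => /negbTE ->.
rewrite -{1}[m]add0n big_addn big_mkord; apply: eq_bigr => i _.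
by rewrite leq_addl.
Qed.

Lemma sum_head (F : nat -> R) m N : (m <= N)%N ->
  \sum_(1 <= n < N.+1) (if (n <= m)%N then F n else 0) = \sum_(1 <= n < m.+1) F n.
Proof.
move=> mN; rewrite (big_cat_nat (n := m.+1)) //=.
rewrite [X in _ + X]big1_seq ?addr0; last first.
  by move=> i /andP[_]; rewrite mem_index_iota => /andP[mi _]; rewrite leqNgt mi.
by apply: eq_big_nat => i /andP[_]; rewrite ltnS => ->.
Qed.
End Gen.

Section Res.
Context (N : nat) (N0 : (0 < N)%N).

Lemma modN_ge0 z : 0 <= (z %% N%:Z)%Z.
Proof. by apply: modz_ge0; rewrite eqz_nat -lt0n. Qed.

Lemma modN_lt z : (`|(z %% N%:Z)%Z| < N)%N.
Proof. by rewrite -ltz_nat gez0_abs ?modN_ge0 // ltz_pmod // ltz_nat. Qed.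

Definition ordz (z : int) : 'I_N := Ordinal (modN_lt z).

Lemma ordzE z : ((ordz z : nat)%:Z = (z %% N%:Z)%Z).
Proof. by rewrite /= gez0_abs // modN_ge0. Qed.

Lemma dvd_ordz z : (N%:Z %| z - (ordz z : nat)%:Z)%Z.
Proof.
rewrite ordzE {1}(divz_eq z N%:Z) addrK; exact: dvdz_mull.
Qed.

Lemma ord_dvd (x x' : 'I_N) : (N%:Z %| (x : nat)%:Z - (x' : nat)%:Z)%Z -> x = x'.
Proof.
rewrite -eqz_mod_dvd !modz_small ?ltz_nat ?ltn_ord ?andbT // eqz_nat => /eqP h.
exact: val_inj.
Qed.

Lemma dvd_trans3 (a b c : int) : (N%:Z %| a - b)%Z -> (N%:Z %| c - b)%Z -> (N%:Z %| a - c)%Z.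
Proof.
move=> h1 h2; have -> : a - c = (a - b) - (c - b) by ring.
exact: rpredB.
Qed.

Lemma count_res (R : pzRingType) (s : int) :
  \sum_(x < N) ((N%:Z %| (x : nat)%:Z - s)%Z)%:R = 1 :> R.
Proof.
have h0 : (N%:Z %| (ordz s : nat)%:Z - s)%Z.
  by rewrite -opprB rpredN dvd_ordz.
rewrite (bigD1 (ordz s)) //= h0 big1 ?addr0 // => x xs.
case hx: (N%:Z %| _ - s)%Z => //; exfalso; move/negP: xs; apply; apply/eqP.
by apply: ord_dvd; apply: dvd_trans3 hx h0.
Qed.

Lemma reindex_res (R : pzRingType) (L : int -> R) (t : int) :
  (forall z z', (N%:Z %| z - z')%Z -> L z = L z') ->
  \sum_(x < N) L ((x : nat)%:Z + t) = \sum_(x < N) L (x : nat)%:Z.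
Proof.
move=> hL; pose h (x : 'I_N) := ordz ((x : nat)%:Z + t).
have hinj : injective h.
  move=> x x' /(congr1 (fun o : 'I_N => (o : nat)%:Z)); rewrite /h !ordzE => e.
  apply: ord_dvd; have : (N%:Z %| ((x : nat)%:Z + t) - ((x' : nat)%:Z + t))%Z.
    by rewrite -eqz_mod_dvd e.
  by have -> : (x : nat)%:Z + t - ((x' : nat)%:Z + t) = (x : nat)%:Z - (x' : nat)%:Z by ring.
rewrite [RHS](reindex_inj hinj) /=; apply: eq_bigr => x _.
by apply: hL; rewrite /h dvd_ordz.
Qed.
End Res.

Section Core.
Context (R : realType) (N : nat) (mu : int -> R) (y : nat -> int).
Hypothesis N0 : (0 < N)%N.
Hypothesis mu0 : forall a : 'I_N, 0 <= mu a.
Hypothesis mu1 : \sum_(a < N) mu a = 1.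

Definition hb n (x : int) f := (N%:Z %| x + Ssm n f - y n)%Z.
Definition hh n x f : R := (hb n x f)%:R.
Definition nh n x f : R := 1 - hh n x f.
Definition first m x f := hh m x f * \prod_(1 <= k < m) nh k x f.
Definition last m x f := hh m x f * \prod_(m.+1 <= k < N.+1) nh k x f.
Definition gg i c := Ex N mu i (fun f => ((N%:Z %| Ssm i f - c)%Z)%:R).

Lemma hh01 n x f : hh n x f = 0 \/ hh n x f = 1.
Proof. by rewrite /hh; case: hb; [right|left]. Qed.

Lemma hh_nh n x f : hh n x f * nh n x f = 0.
Proof. by rewrite /nh; case: (hh01 n x f) => ->; ring. Qed.

Lemma nh_ge0 n x f : 0 <= nh n x f.
Proof. by rewrite /nh; case: (hh01 n x f) => ->; rewrite ?subr0 ?subrr. Qed.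

Lemma nh_le1 n x f : nh n x f <= 1.
Proof. by rewrite /nh; case: (hh01 n x f) => ->; rewrite ?subr0 ?subrr. Qed.

Lemma hh_ge0 n x f : 0 <= hh n x f.
Proof. by case: (hh01 n x f) => ->. Qed.

Lemma prod_nh_ge0 lo hi x f : 0 <= \prod_(lo <= k < hi) nh k x f.
Proof. by apply: prodr_ge0 => k _; exact: nh_ge0. Qed.

Lemma prod_nh01 lo hi x f : 0 <= \prod_(lo <= k < hi) nh k x f <= 1.
Proof.
apply: (big_ind (fun a => 0 <= a <= 1)).
- by rewrite ler01 lexx.
- move=> a b /andP[a0 a1] /andP[b0 b1]; rewrite mulr_ge0 //=.
  by rewrite -[1]mulr1; apply: ler_pM.
- by move=> k _; rewrite nh_ge0 nh_le1.
Qed.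

Lemma prod_hit lo hi n x f : (lo <= n < hi)%N ->
  hh n x f * \prod_(lo <= k < hi) nh k x f = 0.
Proof.
move=> h; rewrite (bigD1_seq n) ?mem_index_iota ?iota_uniq //=.
by rewrite mulrA hh_nh mul0r.
Qed.

Lemma hb_dep n x : dep n (hb n x).
Proof. by move=> f g h; rewrite /hb (@dep_Ssm n f g h). Qed.

Lemma hh_dep n x : dep n (hh n x).
Proof. by move=> f g h; rewrite /hh (@hb_dep n x f g h). Qed.

Lemma first_dep m x : dep m (first m x).
Proof.
move=> f g h; rewrite /first (@hh_dep m x f g h); congr (_ * _).
apply: eq_big_nat => k /andP[_ km]; rewrite /nh (@hh_dep k x f g) //.
by move=> j jk; apply: h; exact: ltn_trans jk km.
Qed.

Lemma fwd_point m n x f1 f2 : (1 <= m <= n)%N ->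
  first m x (app m f1 f2) * hh n x (app m f1 f2) =
  first m x f1 * ((N%:Z %| Ssm (n - m) f2 - (y n - y m))%Z)%:R.
Proof.
move=> /andP[m1 mn].
rewrite (@first_dep m x (app m f1 f2) f1); last by move=> j jm; rewrite /app jm.
rewrite /first /hh /hb Ssm_app //.
case hm: (N%:Z %| x + Ssm m f1 - y m)%Z; last by rewrite !mul0r.
congr (_ * (nat_of_bool _)%:R).
have -> : x + (Ssm m f1 + Ssm (n - m) f2) - y n =
          (x + Ssm m f1 - y m) + (Ssm (n - m) f2 - (y n - y m)) by ring.
by rewrite rpredDl.
Qed.

Lemma dep_div k c : dep k (fun f => ((N%:Z %| Ssm k f - c)%Z)%:R : R).
Proof. by move=> f g h; rewrite (@dep_Ssm k f g h). Qed.

Lemma fwd m n x : (1 <= m <= n)%N -> (n <= N)%N ->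
  Ex N mu N (fun f => first m x f * hh n x f) =
  Ex N mu N (first m x) * gg (n - m) (y n - y m).
Proof.
move=> hmn nN; have mN : (m <= N)%N by case/andP: hmn => _ mn; exact: leq_trans mn nN.
have -> : Ex N mu N (fun f => first m x f * hh n x f) =
          Ex N mu (m + (N - m)) (fun f => first m x f * hh n x f) by rewrite subnKC.
rewrite Ex_split (Ex_dep mu1 (@first_dep m x) mN).
transitivity (Ex N mu m (fun f1 => gg (n - m) (y n - y m) * first m x f1)); last first.
  by rewrite ExZ mulrC.
apply: Ex_ext => f1.
rewrite (@Ex_ext _ N mu _ _ (fun f2 => first m x f1 *
   ((N%:Z %| Ssm (n - m) f2 - (y n - y m))%Z)%:R)); last by move=> f2; exact: fwd_point.
rewrite ExZ mulrC; congr (_ * _); rewrite /gg; apply: (Ex_dep mu1); first exact: dep_div.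
by rewrite leq_sub2r.
Qed.

Lemma split3 n m G : (n <= m <= N)%N ->
  Ex N mu N G = Ex N mu n (fun f1 => Ex N mu (m - n) (fun f2 =>
     Ex N mu (N - m) (fun f3 => G (app n f1 (app (m - n) f2 f3))))).
Proof.
move=> /andP[nm mN].
have -> : Ex N mu N G = Ex N mu (n + ((m - n) + (N - m))) G.
  by congr (Ex _ _ _ _); lia.
rewrite Ex_split; apply: Ex_ext => f1; by rewrite Ex_split.
Qed.

Lemma sum_split3 n m (G : 'I_N -> (nat -> int) -> R) : (n <= m <= N)%N ->
  \sum_(x < N) Ex N mu N (G x) = Ex N mu n (fun f1 => Ex N mu (m - n) (fun f2 =>
     Ex N mu (N - m) (fun f3 => \sum_(x < N) G x (app n f1 (app (m - n) f2 f3))))).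
Proof.
move=> h; rewrite (eq_bigr _ (fun x _ => split3 (G x) h)) -Ex_sum.
apply: Ex_ext => f1; rewrite -Ex_sum; apply: Ex_ext => f2; by rewrite -Ex_sum.
Qed.

Definition Lm m (z : int) (f3 : nat -> int) : R :=
  ((N%:Z %| z - y m)%Z)%:R *
  \prod_(m.+1 <= k < N.+1) (1 - ((N%:Z %| z + Ssm (k - m) f3 - y k)%Z)%:R).

Lemma Ssm3 n m k f1 f2 f3 : (n <= m <= k)%N ->
  Ssm k (app n f1 (app (m - n) f2 f3)) = Ssm n f1 + Ssm (m - n) f2 + Ssm (k - m) f3.
Proof.
move=> /andP[nm mk]; rewrite Ssm_app; last exact: leq_trans nm mk.
rewrite Ssm_app; last by rewrite leq_sub2r.
by rewrite addrA; congr (_ + Ssm _ _); lia.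
Qed.

Lemma last_app n m x f1 f2 f3 : (n <= m <= N)%N ->
  last m x (app n f1 (app (m - n) f2 f3)) = Lm m (x + Ssm n f1 + Ssm (m - n) f2) f3.
Proof.
move=> /andP[nm mN]; rewrite /last /Lm /hh /hb Ssm3 ?nm ?leqnn // subnn.
have -> : Ssm 0 f3 = 0 by rewrite /Ssm big_ord0.
rewrite addr0 !addrA; congr (_ * _); apply: eq_big_nat => k /andP[mk kN].
rewrite /nh /hh /hb Ssm3 ?nm ?(ltnW mk) // !addrA //.
Qed.

Lemma hh_app n m x f1 f2 f3 : (n <= m)%N ->
  hh n x (app n f1 (app (m - n) f2 f3)) = ((N%:Z %| x + Ssm n f1 - y n)%Z)%:R.
Proof. by move=> nm; rewrite /hh /hb Ssm_le. Qed.

Lemma Lm_inv m z z' f3 : (N%:Z %| z - z')%Z -> Lm m z f3 = Lm m z' f3.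
Proof.
move=> hz.
have e a : (N%:Z %| z + a)%Z = (N%:Z %| z' + a)%Z.
  have -> : z + a = (z - z') + (z' + a) by ring.
  by rewrite rpredDl.
rewrite /Lm e; congr (_ * _); apply: eq_big_nat => k _.
by rewrite -!addrA e.
Qed.

Lemma bwd_point m n x f1 f2 f3 : (n <= m <= N)%N ->
  last m x (app n f1 (app (m - n) f2 f3)) * hh n x (app n f1 (app (m - n) f2 f3)) =
  Lm m (x + Ssm n f1 + Ssm (m - n) f2) f3 *
    ((N%:Z %| Ssm (m - n) f2 - (y m - y n))%Z)%:R.
Proof.
move=> h; rewrite last_app // hh_app; last by case/andP: h.
rewrite /Lm.
case hm: (N%:Z %| x + Ssm n f1 + Ssm (m - n) f2 - y m)%Z; last by rewrite !mul0r.
rewrite !mul1r; congr (_ * (nat_of_bool _)%:R).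
have e : x + Ssm n f1 + Ssm (m - n) f2 - y m =
          (x + Ssm n f1 - y n) + (Ssm (m - n) f2 - (y m - y n)) by ring.
move: hm; rewrite e => hm; apply/idP/idP => h1.
  by rewrite -(rpredDl _ h1).
by rewrite -(rpredDr _ h1).
Qed.

Definition Lam m f3 := \sum_(x < N) Lm m (x : nat)%:Z f3.

Lemma sum_Lm m t f3 : \sum_(x < N) Lm m ((x : nat)%:Z + t) f3 = Lam m f3.
Proof. by rewrite /Lam (reindex_res N0 (L := fun z => Lm m z f3)) // => z z' hz; apply: Lm_inv. Qed.

Lemma bwd n m : (n <= m <= N)%N ->
  \sum_(x < N) Ex N mu N (fun f => last m (x : nat)%:Z f * hh n (x : nat)%:Z f) =
  (\sum_(x < N) Ex N mu N (last m (x : nat)%:Z)) * gg (m - n) (y m - y n).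
Proof.
move=> h.
rewrite (sum_split3 (fun (x : 'I_N) f => last m (x : nat)%:Z f * hh n (x : nat)%:Z f) h).
rewrite (sum_split3 (fun (x : 'I_N) f => last m (x : nat)%:Z f) h).
transitivity (Ex N mu n (fun f1 => Ex N mu (m - n) (fun f2 =>
     Ex N mu (N - m) (fun f3 => ((N%:Z %| Ssm (m - n) f2 - (y m - y n))%Z)%:R * Lam m f3)))).
  apply: Ex_ext => f1; apply: Ex_ext => f2; apply: Ex_ext => f3.
  under eq_bigr do rewrite bwd_point // -addrA.
  by rewrite -mulr_suml sum_Lm mulrC.
transitivity (Ex N mu n (fun f1 => Ex N mu (N - m) (Lam m) * gg (m - n) (y m - y n))).
  apply: Ex_ext => f1; under Ex_ext do rewrite ExZ mulrC.
  by rewrite ExZ.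
rewrite (Ex_const mu1); congr (_ * _).
rewrite -[LHS](Ex_const mu1 n); apply: Ex_ext => f1.
rewrite -[LHS](Ex_const mu1 (m - n)); apply: Ex_ext => f2.
apply: Ex_ext => f3; under eq_bigr do rewrite last_app // -addrA.
by rewrite sum_Lm.
Qed.

Lemma hhE m x f : hh m x f = 1 - nh m x f.
Proof. by rewrite /nh; ring. Qed.

Lemma sum_first_all x f :
  \sum_(1 <= m < N.+1) first m x f = 1 - \prod_(1 <= k < N.+1) nh k x f.
Proof.
rewrite -(tel_first (fun k => nh k x f)) //.
by apply: eq_big_nat => m _; rewrite /first hhE.
Qed.

Lemma tail_last a x f : (a <= N.+1)%N ->
  \sum_(a <= m < N.+1) last m x f = 1 - \prod_(a <= k < N.+1) nh k x f.
Proof.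
move=> aN; rewrite -(tel_last (fun k => nh k x f)) //.
by apply: eq_big_nat => m _; rewrite /last hhE.
Qed.

Lemma tail_first a x f : (1 <= a <= N.+1)%N ->
  \sum_(a <= m < N.+1) first m x f =
  \prod_(1 <= k < a) nh k x f - \prod_(1 <= k < N.+1) nh k x f.
Proof.
move=> /andP[a1 aN].
have := sum_first_all x f; rewrite (big_cat_nat (n := a)) //=.
have -> : \sum_(1 <= i < a) first i x f = 1 - \prod_(1 <= k < a) nh k x f.
  rewrite -(tel_first (fun k => nh k x f)) //.
  by apply: eq_big_nat => m _; rewrite /first hhE.
move=> e; apply: (addrI (1 - \prod_(1 <= k < a) nh k x f)); rewrite e; ring.
Qed.

Lemma sum_last_all x f :
  \sum_(1 <= m < N.+1) last m x f = 1 - \prod_(1 <= k < N.+1) nh k x f.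
Proof. exact: tail_last. Qed.

Lemma sum_first_hh n x f : (1 <= n <= N)%N ->
  \sum_(1 <= m < N.+1) first m x f * hh n x f = hh n x f.
Proof.
move=> h; rewrite -mulr_suml sum_first_all mulrBl mul1r mulrC prod_hit ?subr0 //.
Qed.

Lemma sum_last_hh n x f : (1 <= n <= N)%N ->
  \sum_(1 <= m < N.+1) last m x f * hh n x f = hh n x f.
Proof.
move=> h; rewrite -mulr_suml sum_last_all mulrBl mul1r mulrC prod_hit ?subr0 //.
Qed.

Lemma first_hh0 m n x f : (1 <= n < m)%N -> first m x f * hh n x f = 0.
Proof.
move=> h; by rewrite /first mulrAC -mulrA prod_hit ?mulr0.
Qed.

Lemma last_hh0 m n x f : (m < n <= N)%N -> last m x f * hh n x f = 0.
Proof.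
move=> h; by rewrite /last mulrAC -mulrA prod_hit ?mulr0 // ltnS.
Qed.

Lemma Fe_first x f :
  ([exists n : 'I_N, hb n.+1 x f])%:R = \sum_(1 <= m < N.+1) first m x f.
Proof.
rewrite sum_first_all; case: existsP => [[n hn]|hn].
  have := @prod_hit 1 N.+1 n.+1 x f; rewrite /= ltnS ltn_ord => /(_ isT).
  by rewrite /hh hn mul1r => ->; rewrite subr0.
rewrite big1_seq ?subrr // => k /andP[_]; rewrite mem_index_iota => /andP[k1 kN].
rewrite /nh /hh; case hk: (hb k x f); last by rewrite subr0.
exfalso; apply: hn; have kN' : (k.-1 < N)%N by rewrite prednK.
by exists (Ordinal kN'); rewrite /= prednK.
Qed.

Lemma exch (w q : nat -> R) :
  \sum_(1 <= m < N.+1) w m * \sum_(i < m) q i =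
  \sum_(i < N.+1) q i * \sum_(i.+1 <= m < N.+1) w m.
Proof.
have -> : \sum_(1 <= m < N.+1) w m * \sum_(i < m) q i =
          \sum_(0 <= m < N.+1) \sum_(0 <= i < m) w m * q i.
  rewrite [RHS]big_ltn //= [X in _ = X + _]big_geq // add0r; apply: eq_big_nat => m _.
  by rewrite mulr_sumr big_mkord.
rewrite tri big_mkord; apply: eq_bigr => i _.
by rewrite mulr_sumr; apply: eq_big_nat => m _; rewrite mulrC.
Qed.

Lemma C_point (q : nat -> R) x f : (forall i, 0 <= q i) ->
  \sum_(1 <= m < N.+1) first m x f * \sum_(i < m) q i <=
  \sum_(1 <= m < N.+1) last m x f * \sum_(i < m) q i.
Proof.
move=> q0; rewrite !exch; apply: ler_sum => i _; apply: ler_wpM2l => //.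
have ha : (1 <= i.+1 <= N.+1)%N by rewrite ltn_ord.
rewrite tail_first // tail_last; last by case/andP: ha.
rewrite (big_cat_nat (n := i.+1) (m := 1%N) (p := N.+1)) //=.
have [u0 u1] := andP (prod_nh01 1 i.+1 x f).
have [v0 v1] := andP (prod_nh01 i.+1 N.+1 x f).
set u := \prod_(1 <= k < i.+1) nh k x f.
set v := \prod_(i.+1 <= k < N.+1) nh k x f.
rewrite -subr_ge0; have -> : 1 - v - (u - u * v) = (1 - u) * (1 - v) by ring.
by apply: mulr_ge0; rewrite subr_ge0.
Qed.

Hypothesis ylip : forall n : nat, (1 <= n)%N -> (n <= N - 1)%N -> `|y n - y n.+1| <= 1.

Lemma lip a b : (1 <= a)%N -> (a <= b)%N -> (b <= N)%N -> `|y b - y a| <= (b - a)%:Z.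
Proof.
move=> a1 ab bN.
have [k ek] : exists k, b = (a + k)%N by exists (b - a)%N; rewrite subnKC.
subst b; clear ab; elim: k bN => [|k IH] hk; first by rewrite addn0 subrr normr0.
rewrite addnS in hk *.
apply: le_trans (ler_distD (y (a + k)%N) _ _) _.
have -> : ((a + k).+1 - a)%N = (1 + k)%N by lia.
rewrite PoszD lerD //; last by rewrite addKn in IH; apply: IH; exact: ltnW.
rewrite distrC; apply: ylip; first exact: leq_trans a1 (leq_addr _ _).
by rewrite leq_subRL ?addn1 // (leq_trans _ hk).
Qed.

Lemma EK n : \sum_(x < N) Ex N mu N (hh n (x : nat)%:Z) = 1.
Proof.
rewrite -Ex_sum -[RHS](Ex_const mu1 N); apply: Ex_ext => f.
rewrite -[RHS](count_res N0 R (y n - Ssm n f)); apply: eq_bigr => x _.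
by rewrite /hh /hb; congr ((nat_of_bool _)%:R); congr (_ %| _)%Z; ring.
Qed.

Definition ef m (x : 'I_N) := Ex N mu N (first m (x : nat)%:Z).
Definition el m (x : 'I_N) := Ex N mu N (last m (x : nat)%:Z).
Definition Gf m := \sum_(1 <= n < N.+1) (if (m <= n)%N then gg (n - m) (y n - y m) else 0).
Definition Hb m := \sum_(1 <= n < N.+1) (if (n <= m)%N then gg (m - n) (y m - y n) else 0).

Lemma NE : N%:R = \sum_(1 <= n < N.+1) \sum_(x < N) Ex N mu N (hh n (x : nat)%:Z) :> R.
Proof. by rewrite (eq_bigr _ (fun n _ => EK n)) sumr_const_nat subn1. Qed.

Lemma fwd_ident : N%:R = \sum_(x < N) \sum_(1 <= m < N.+1) ef m x * Gf m :> R.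
Proof.
rewrite NE exchange_big /=; apply: eq_bigr => x _.
transitivity (\sum_(1 <= n < N.+1) \sum_(1 <= m < N.+1)
     (if (m <= n)%N then ef m x * gg (n - m) (y n - y m) else 0)).
  apply: eq_big_nat => n /andP[n1 nN].
  rewrite (@Ex_ext _ N mu _ _ (fun f => \sum_(1 <= m < N.+1) first m (x : nat)%:Z f * hh n (x : nat)%:Z f)).
    rewrite Ex_sum_seq; apply: eq_big_nat => m /andP[m1 mN].
    case: ifP => mn; first by rewrite fwd ?m1 ?mn // -ltnS.
    rewrite (@Ex_ext _ N mu _ _ (fun _ => 0)) ?(Ex_const mu1) // => f.
    by rewrite first_hh0 // n1 ltnNge mn.
  by move=> f; rewrite sum_first_hh // n1 -ltnS.
rewrite exchange_big /=; apply: eq_big_nat => m _.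
by rewrite /Gf mulr_sumr; apply: eq_big_nat => n _; case: ifP; rewrite ?mulr0.
Qed.

Lemma bwd_ident : N%:R = \sum_(1 <= m < N.+1) (\sum_(x < N) el m x) * Hb m :> R.
Proof.
rewrite NE.
transitivity (\sum_(1 <= n < N.+1) \sum_(1 <= m < N.+1)
     (if (n <= m)%N then (\sum_(x < N) el m x) * gg (m - n) (y m - y n) else 0)).
  apply: eq_big_nat => n /andP[n1 nN].
  transitivity (\sum_(x < N) \sum_(1 <= m < N.+1)
      Ex N mu N (fun f => last m (x : nat)%:Z f * hh n (x : nat)%:Z f)).
    apply: eq_bigr => x _; rewrite -Ex_sum_seq; apply: Ex_ext => f.
    by rewrite sum_last_hh // n1 -ltnS.
  rewrite exchange_big /=; apply: eq_big_nat => m /andP[m1 mN].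
  case: ifP => nm; first by rewrite bwd // nm -ltnS.
  apply: big1 => x _; rewrite (@Ex_ext _ N mu _ _ (fun _ => 0)) ?(Ex_const mu1) // => f.
  by rewrite last_hh0 // ltnNge nm -ltnS.
rewrite exchange_big /=; apply: eq_big_nat => m _.
by rewrite /Hb mulr_sumr; apply: eq_big_nat => n _; case: ifP; rewrite ?mulr0.
Qed.

Lemma ef_ge0 m x : 0 <= ef m x.
Proof.
apply: (Ex_ge0 mu0) => f; rewrite /first mulr_ge0 ?hh_ge0 //.
by case/andP: (prod_nh01 1 m (x : nat)%:Z f).
Qed.

Lemma el_ge0 m x : 0 <= el m x.
Proof.
apply: (Ex_ge0 mu0) => f; rewrite /last mulr_ge0 ?hh_ge0 //.
by case/andP: (prod_nh01 m.+1 N.+1 (x : nat)%:Z f).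
Qed.

Lemma gg_ge0 i c : 0 <= gg i c.
Proof. by apply: (Ex_ge0 mu0) => f; rewrite ler0n. Qed.

Lemma gg00 : gg 0 0 = 1.
Proof. by rewrite /gg /= /Ssm big_ord0 subrr dvdz0. Qed.

Lemma sum_mono_ord (F : nat -> R) a b : (a <= b)%N -> (forall i, 0 <= F i) ->
  \sum_(i < a) F i <= \sum_(i < b) F i.
Proof.
move=> ab F0; rewrite -!(big_mkord xpredT) (big_cat_nat (n := a) (m := 0%N) (p := b)) //=.
by rewrite lerDl sumr_ge0.
Qed.

Lemma Gf_tail m : (1 <= m <= N)%N ->
  Gf m = \sum_(i < N.+1 - m) gg i (y (i + m)%N - y m).
Proof.
move=> /andP[m1 mN]; rewrite /Gf sum_tail; last by rewrite m1 ltnW.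
by apply: eq_bigr => i _; rewrite addnK.
Qed.

Lemma Hb_head m : (m <= N)%N ->
  Hb m = \sum_(1 <= n < m.+1) gg (m - n) (y m - y n).
Proof. by move=> mN; rewrite /Hb sum_head. Qed.

Section Bounds.
Variables pp qq : nat -> R.
Hypothesis hp : forall i c, `|c| <= i%:Z -> gg i c <= pp i.
Hypothesis hq : forall i c, `|c| <= i%:Z -> qq i <= gg i c.

Lemma pp_ge0 i : 0 <= pp i.
Proof. by apply: (le_trans (gg_ge0 i 0)); apply: hp; rewrite normr0. Qed.

Lemma Gf_le m : (1 <= m <= N)%N -> Gf m <= \sum_(i < N) pp i.
Proof.
move=> h; rewrite Gf_tail //; case/andP: h => m1 mN.
apply: (@le_trans _ _ (\sum_(i < N.+1 - m) pp i)); last first.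
  by apply: sum_mono_ord; [lia|exact: pp_ge0].
apply: ler_sum => i _; apply: hp.
have iN : (i + m <= N)%N by have := ltn_ord i; lia.
by have := lip m1 (leq_addl i m) iN; rewrite addnK.
Qed.

Lemma Gf_ge m : (1 <= m <= N)%N -> \sum_(i < N.+1 - m) qq i <= Gf m.
Proof.
move=> h; rewrite Gf_tail //; case/andP: h => m1 mN.
apply: ler_sum => i _; apply: hq.
have iN : (i + m <= N)%N by have := ltn_ord i; lia.
by have := lip m1 (leq_addl i m) iN; rewrite addnK.
Qed.

Lemma Hb_ge m : (m <= N)%N -> \sum_(i < m) qq i <= Hb m.
Proof.
move=> mN; rewrite Hb_head // -sum_rev; apply: ler_sum_nat => n /andP[n1 nm].
apply: hq; apply: lip => //; rewrite -ltnS.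
Qed.

Lemma q_small i : (N <= i.*2.+1)%N -> N%:R * qq i <= 1.
Proof.
move=> hi.
have e : \sum_(j < N) gg i ((j : nat)%:Z - i%:Z) = 1.
  rewrite /gg -Ex_sum -[RHS](Ex_const mu1 i); apply: Ex_ext => f.
  rewrite -[RHS](count_res N0 R (Ssm i f + i%:Z)); apply: eq_bigr => j _.
  congr ((nat_of_bool _)%:R); rewrite -[in RHS]rpredN; congr (_ %| _)%Z; ring.
have -> : N%:R * qq i = \sum_(j < N) qq i.
  by rewrite sumr_const card_ord mulr_natl.
rewrite -e.
apply: ler_sum => j _; apply: hq; rewrite ler_norml.
have := ltn_ord j; rewrite -addnn in hi; move: hi.
move: (j : nat) => jj hi hj; apply/andP; split.
  by rewrite lerBrDr addNr.
rewrite lerBlDr -PoszD lez_nat -ltnS; exact: leq_trans hj hi.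
Qed.

Hypothesis qq0 : forall i, 0 <= qq i.
Hypothesis qq00 : qq 0%N = 1.

Lemma q0_le k : (1 <= k)%N -> 1 <= \sum_(i < k) qq i.
Proof.
move=> k1; apply: (le_trans _ (sum_mono_ord k1 qq0)).
by rewrite big_ord1 qq00.
Qed.

Lemma tail_small c : (forall i, (c <= i)%N -> N%:R * qq i <= 1) -> (c <= N)%N ->
  \sum_(c <= i < N) qq i <= 1.
Proof.
move=> hc cN.
have N0' : 0 < N%:R :> R by rewrite ltr0n.
apply: (@le_trans _ _ (\sum_(c <= i < N) N%:R^-1)).
  apply: ler_sum_nat => i /andP[ci _].
  by rewrite -(ler_pM2l N0') mulfV ?lt0r_neq0 // hc.
rewrite sumr_const_nat -(mulr_natl (N%:R^-1) (N - c)).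
apply: (@le_trans _ _ (N%:R * N%:R^-1)); last by rewrite mulfV ?lt0r_neq0.
by apply: ler_wpM2r; rewrite ?invr_ge0 ?ler0n // ler_nat leq_subr.
Qed.

Lemma split_ord c : (c <= N)%N ->
  \sum_(i < N) qq i = \sum_(i < c) qq i + \sum_(c <= i < N) qq i.
Proof.
move=> cN; rewrite -!(big_mkord xpredT) (big_cat_nat (n := c) (m := 0%N) (p := N)) //.
Qed.

Lemma Qcomb m : (1 <= m <= N)%N ->
  \sum_(i < N) qq i <= \sum_(i < N.+1 - m) qq i + \sum_(i < m) qq i.
Proof.
move=> /andP[m1 mN]; case: (leqP (N.+1 - m) m) => h.
  rewrite (split_ord mN) addrC lerD2r; apply: (le_trans _ (q0_le _)); last by rewrite subn_gt0.
  apply: tail_small => // i mi; apply: q_small; lia.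
have cN : (N.+1 - m <= N)%N by lia.
rewrite (split_ord cN) lerD2l; apply: (le_trans _ (q0_le m1)).
apply: tail_small => // i mi; apply: q_small; lia.
Qed.

Definition Vv := N%:R^-1 * \sum_(x < N) Ex N mu N
   (fun f => ([exists n : 'I_N, hb n.+1 (x : nat)%:Z f])%:R).

Lemma Vv_A : Vv = N%:R^-1 * \sum_(x < N) \sum_(1 <= m < N.+1) ef m x.
Proof.
rewrite /Vv; congr (_ * _); apply: eq_bigr => x _.
rewrite (@Ex_ext _ N mu _ _ (fun f => \sum_(1 <= m < N.+1) first m (x : nat)%:Z f)).
  by rewrite Ex_sum_seq.
by move=> f; rewrite Fe_first.
Qed.

Theorem core_thm :
  1 / (\sum_(i < N) pp i) <= Vv /\ Vv <= 2 / (\sum_(i < N) qq i).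
Proof.
have N0' : 0 < N%:R :> R by rewrite ltr0n.
set A := \sum_(x < N) \sum_(1 <= m < N.+1) ef m x.
have A0 : 0 <= A by apply: sumr_ge0 => x _; apply: sumr_ge0 => m _; exact: ef_ge0.
rewrite Vv_A; split.
  have Pp1 : 1 <= \sum_(i < N) pp i.
    apply: (le_trans _ (sum_mono_ord N0 pp_ge0)); rewrite big_ord1 -gg00.
    by apply: hp; rewrite normr0.
  rewrite ler_pdivrMr; last exact: lt_le_trans ltr01 Pp1.
  rewrite -mulrA ler_pdivlMl // mulr1.
  rewrite [X in X <= _]fwd_ident /A mulr_suml; apply: ler_sum => x _.
  rewrite mulr_suml; apply: ler_sum_nat => m hm.
  by apply: ler_wpM2l; [exact: ef_ge0|exact: Gf_le].
have Qt1 := q0_le N0.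
rewrite ler_pdivlMr; last exact: lt_le_trans ltr01 Qt1.
rewrite -mulrA ler_pdivrMl // mulr_natr mulr2n.
apply: (@le_trans _ _ (\sum_(x < N) \sum_(1 <= m < N.+1)
   (ef m x * \sum_(i < N.+1 - m) qq i + ef m x * \sum_(i < m) qq i))).
  rewrite /A mulr_suml; apply: ler_sum => x _; rewrite mulr_suml; apply: ler_sum_nat => m hm.
  by rewrite -mulrDr; apply: ler_wpM2l; [exact: ef_ge0|exact: Qcomb].
under eq_bigr do rewrite big_split; rewrite big_split /=; apply: lerD.
  rewrite [X in _ <= X]fwd_ident; apply: ler_sum => x _; apply: ler_sum_nat => m hm.
  by apply: ler_wpM2l; [exact: ef_ge0|exact: Gf_ge].
apply: (@le_trans _ _ (\sum_(x < N) Ex N mu N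
   (fun f => \sum_(1 <= m < N.+1) first m (x : nat)%:Z f * \sum_(i < m) qq i))).
  rewrite le_eqVlt; apply/orP; left; apply/eqP; apply: eq_bigr => x _; rewrite Ex_sum_seq; apply: eq_bigr => m _.
  by rewrite /ef mulrC -ExZ; apply: Ex_ext => f; rewrite mulrC.
apply: (@le_trans _ _ (\sum_(x < N) Ex N mu N
   (fun f => \sum_(1 <= m < N.+1) last m (x : nat)%:Z f * \sum_(i < m) qq i))).
  by apply: ler_sum => x _; apply: (Ex_le mu0) => f; exact: C_point.
rewrite [X in _ <= X]bwd_ident.
apply: (@le_trans _ _ (\sum_(1 <= m < N.+1) (\sum_(x < N) el m x) * \sum_(i < m) qq i)).
  rewrite le_eqVlt; apply/orP; left; apply/eqP.
  under eq_bigr do rewrite Ex_sum_seq.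
  rewrite exchange_big /=; apply: eq_big_nat => m _; rewrite mulr_suml; apply: eq_bigr => x _.
  by rewrite /el mulrC -ExZ; apply: Ex_ext => f; rewrite mulrC.
apply: ler_sum_nat => m /andP[_ mN]; apply: ler_wpM2l.
  by apply: sumr_ge0 => x _; exact: el_ge0.
by apply: Hb_ge; rewrite -ltnS.
Qed.
End Bounds.
End Core.

Local Open Scope classical_set_scope.
Local Open Scope ring_scope.

Section Rep.
Context d (T : measurableType d) (R : realType) (P : probability T R).
Context (X : nat -> T -> int).
Hypothesis mX : forall j (k : int), measurable [set w | X j w = k].
Hypothesis hid : forall j (k : int), P [set w | X j w = k] = P [set w | X 0%N w = k].
Hypothesis hprod : forall (J : seq nat) (k : nat -> int), uniq J ->
         P [set w | forall j, j \in J -> X j w = k j]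
         = \big[*%E/1%E]_(j <- J) P [set w | X j w = k j].
Context (N : nat) (N0 : (0 < N)%N).

Definition Z j w := ((X j w) %% N%:Z)%Z.
Definition Zf w : nat -> int := fun j => Z j w.
Definition mu (a : int) := pr P [set w | Z 0 w = a].

Lemma same_dist j (A : set int) : P [set w | A (X j w)] = P [set w | A (X 0%N w)].
Proof.
have e i : [set w | A (X i w)] = \bigcup_k ([set w | X i w = k] `&` cset (A k)).
  apply/seteqP; split => w /=; first by move=> Aw; exists (X i w).
  by move=> [k _ [/= -> ]].
rewrite !e (@sig_int _ _ _ P _ (fun k => [set w | X 0%N w = k] `&` cset (A k)) 1) ?mul1e //.
- by move=> k; apply: measurableI => //; exact: meas_cset.
- by move=> k; apply: measurableI => //; exact: meas_cset.
- by move=> a b _ _ [w [[/= <- _] [/= <- _]]].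
- by move=> a b _ _ [w [[/= <- _] [/= <- _]]].
- move=> k; rewrite mul1e; case: (pselect (A k)) => Ak.
    have -> : cset (A k) = setT :> set T by apply/seteqP; split.
    by rewrite !setIT hid.
  have -> : cset (A k) = set0 :> set T by apply/seteqP; split.
  by rewrite !setI0.
Qed.

Lemma mZ j (a : int) : measurable [set w | Z j w = a].
Proof. exact: (meas_in mX j [set x | (x %% N%:Z)%Z = a]). Qed.

Lemma indres (L : seq nat) (b : nat -> int) : uniq L ->
  pr P [set w | forall j, j \in L -> Z j w = b j] = \prod_(j <- L) mu (b j).
Proof.
move=> uL.
have := @ind_gen _ _ _ P X mX hprod L [::] (fun j => [set x | (x %% N%:Z)%Z = b j]) (fun _ => 0).
rewrite cats0 => /(_ uL).
have -> : [set w | (forall j, j \in L -> (X j w %% N%:Z)%Z = b j) /\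
                   (forall j, j \in [::] -> X j w = 0)] =
          [set w | forall j, j \in L -> Z j w = b j].
  by apply/seteqP; split => w /=; [case|move=> h; split].
rewrite /pr => ->; rewrite big_nil mulr1 /=; apply: eq_bigr => j _.
by rewrite /mu /pr (same_dist j [set x | (x %% N%:Z)%Z = b j]).
Qed.

Lemma Z_range j w : (0 <= Z j w) /\ (Z j w < N%:Z).
Proof.
split; first by apply: modz_ge0; rewrite eqz_nat -lt0n.
by apply: ltz_pmod; rewrite ltz_nat.
Qed.

Lemma Z_ord j w : exists a : 'I_N, Z j w = (a : nat)%:Z.
Proof.
have [h1 h2] := Z_range j w.
have hlt : (`|Z j w| < N)%N by rewrite -ltz_nat gez0_abs.
by exists (Ordinal hlt); rewrite /= gez0_abs.
Qed.

Lemma mu_ge0 a : 0 <= mu a.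
Proof. exact: pr_ge0. Qed.

Lemma mu_sum : \sum_(a < N) mu a = 1.
Proof.
rewrite /mu -pr_bigU.
- have -> : \big[setU/set0]_(a < N) [set w | Z 0 w = (a : nat)%:Z] = setT.
    apply/seteqP; split => // w _; apply/mem_bigU.
    by have [a ha] := Z_ord 0 w; exists a.
  by rewrite /pr probability_setT.
- by move=> a; exact: mZ.
- move=> a b _ _ [w [/= -> ]] /eqP; rewrite eqz_nat => /eqP ab.
  by apply: val_inj.
Qed.

Lemma rep_pins K (F : (nat -> int) -> bool) (L : seq nat) (b : nat -> int) :
  dep K F -> uniq L -> all (fun j => K <= j)%N L ->
  measurable [set w | F (Zf w) /\ forall j, j \in L -> Z j w = b j] /\
  pr P [set w | F (Zf w) /\ forall j, j \in L -> Z j w = b j]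
    = Ex N mu K (fun f => (F f)%:R) * \prod_(j <- L) mu (b j).
Proof.
elim: K F L b => [|K IH] F L b dF uL aL.
  have e w : F (Zf w) = F (fun _ => 0) by apply: dF.
  have mP : measurable [set w | forall j, j \in L -> Z j w = b j].
    by apply: meas_all => j; exact: mZ.
  rewrite /=; case E: (F (fun _ => 0)).
    have -> : [set w | F (Zf w) /\ forall j, j \in L -> Z j w = b j] =
              [set w | forall j, j \in L -> Z j w = b j].
      by apply/seteqP; split => w /=; rewrite e E; [case|].
    by rewrite indres // mul1r.
  have -> : [set w | F (Zf w) /\ forall j, j \in L -> Z j w = b j] = set0.
    by apply/seteqP; split => w //=; rewrite e E; case.
  by rewrite /pr measure0 mul0r.
pose Fa (a : int) := fun f => F (setk K a f).
pose ba (a : int) := setk K a b.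
have dFa a : dep K (Fa a).
  move=> f g h; apply: dF => j; rewrite ltnS leq_eqVlt /setk => /orP[/eqP ->|jK].
    by rewrite eqxx.
  by rewrite (ltn_eqF jK) h.
have KL : K \notin L.
  apply/negP => KL; have := allP aL K KL; by rewrite ltnn.
have uKL : uniq (K :: L) by rewrite /= KL uL.
have aKL : all (fun j => K <= j)%N (K :: L).
  rewrite /= leqnn /=; apply/allP => j /(allP aL); exact: ltnW.
pose S (a : 'I_N) := [set w | Fa a (Zf w) /\ forall j, j \in K :: L -> Z j w = ba a j].
have e : [set w | F (Zf w) /\ forall j, j \in L -> Z j w = b j] =
         \big[setU/set0]_(a < N) S a.
  apply/seteqP; split => w /=.
    move=> [Fw Lw]; apply/mem_bigU; have [a ha] := Z_ord K w; exists a; split.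
      rewrite /Fa; congr (F _ = true): Fw; apply: funext => j; rewrite /setk.
      by case: eqP => // ->; rewrite /Zf.
    move=> j; rewrite inE /ba /setk; case: eqP => [->//|_] /= /Lw //.
  move=> /mem_bigU [a [Fw Lw]]; have ZK : Z K w = (a : nat)%:Z.
    by have := Lw K; rewrite inE eqxx /ba /setk eqxx => ->.
  split.
    move: Fw; rewrite /Fa; congr (F _ = true); apply: funext => j; rewrite /setk.
    by case: eqP => // ->; rewrite /Zf.
  move=> j jL; have := Lw j; rewrite inE jL orbT /ba /setk => /(_ isT).
  by case: eqP => // ej; move: KL; rewrite -ej jL.
have mS a : measurable (S a) by case: (IH (Fa a) (K :: L) (ba a) (dFa a) uKL aKL).
split; first by rewrite e; apply: bigsetU_measurable => a _; exact: mS.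
rewrite e pr_bigU //; last first.
  move=> a a' _ _ [w [[_ h1] [_ h2]]].
  move: (h1 K) (h2 K); rewrite inE eqxx /ba /setk eqxx => -> // /(_ isT) /eqP.
  by rewrite eqz_nat => /eqP; apply: val_inj.
rewrite (@Ex_last _ _ _ K (fun f => (F f)%:R)); last first.
  by move=> f g h; rewrite (dF f g h).
rewrite mulr_suml; apply: eq_bigr => a _.
have [_ ->] := IH (Fa a) (K :: L) (ba a) (dFa a) uKL aKL.
rewrite big_cons /ba /setk eqxx.
have -> : \prod_(j <- L) mu (if j == K then (a : nat)%:Z else b j) = \prod_(j <- L) mu (b j).
  by apply: eq_big_seq => j jL; case: eqP => // ej; move: KL; rewrite -ej jL.
by rewrite /Fa /setk; ring.
Qed.

Lemma rep K (F : (nat -> int) -> bool) : dep K F ->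
  pr P [set w | F (Zf w)] = Ex N mu K (fun f => (F f)%:R).
Proof.
move=> dF; have [_ h] := rep_pins (L := [::]) (fun _ => 0) dF (isT : uniq [::]) (isT : all _ [::]).
rewrite big_nil mulr1 in h; rewrite -h; congr (pr P _).
by apply/seteqP; split => w /=; [move=> ?; split|case].
Qed.

Lemma rep_meas K (F : (nat -> int) -> bool) : dep K F ->
  measurable [set w | F (Zf w)].
Proof.
move=> dF; have [h _] := rep_pins (L := [::]) (fun _ => 0) dF (isT : uniq [::]) (isT : all _ [::]).
have <- // : [set w | F (Zf w) /\ forall j, j \in [::] -> Z j w = 0] = [set w | F (Zf w)].
by apply/seteqP; split => w /=; [case|move=> ?; split].
Qed.
End Rep.

Section Final.
Context d (T : measurableType d) (R : realType) (P : probability T R).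
Context (X : nat -> T -> int) (N : nat).

Lemma Ssum_Ssm n w : (N%:Z %| Ssum X n w - Ssm n (Zf X N w))%Z.
Proof.
rewrite /Ssum /Ssm -sumrB; apply: rpred_sum => j _.
rewrite /Zf /Z {1}(divz_eq (X j w) N%:Z) addrK; exact: dvdz_mull.
Qed.

Lemma dvd_swap (a b c : int) : (N%:Z %| a - b)%Z -> (N%:Z %| a - c)%Z = (N%:Z %| b - c)%Z.
Proof.
move=> h; have -> : a - c = (a - b) + (b - c) by ring.
by rewrite rpredDl.
Qed.

Lemma rclassE c s : rclass N c s <-> (N%:Z %| s - c)%Z.
Proof.
split.
  by move=> [k ->]; rewrite addrC addKr dvdz_mull.
by move=> /dvdzP [q e]; exists q; rewrite -e addrC subrK.
Qed.

Lemma rclass_set i c : [set w | rclass N c (Ssum X i w)] =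
  [set w | (N%:Z %| Ssm i (Zf X N w) - c)%Z].
Proof.
apply/seteqP; split => w /=.
  by move=> /rclassE; rewrite (dvd_swap _ (Ssum_Ssm i w)).
by move=> h; apply/rclassE; rewrite (dvd_swap _ (Ssum_Ssm i w)).
Qed.
End Final.

Section Final2.
Context d (T : measurableType d) (R : realType) (P : probability T R).
Context (X : nat -> T -> int) (N : nat) (y : nat -> int).
Hypothesis mX : forall j (k : int), measurable [set w | X j w = k].
Hypothesis hid : forall j (k : int), P [set w | X j w = k] = P [set w | X 0%N w = k].
Hypothesis hprod : forall (J : seq nat) (k : nat -> int), uniq J ->
         P [set w | forall j, j \in J -> X j w = k j]
         = \big[*%E/1%E]_(j <- J) P [set w | X j w = k j].
Hypothesis N0 : (0 < N)%N.

Lemma dep_rclass i c : dep i (fun f => (N%:Z %| Ssm i f - c)%Z).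
Proof. by move=> f g h; rewrite (@dep_Ssm i f g h). Qed.

Lemma gg_pr i c : pr P [set w | rclass N c (Ssum X i w)] = gg N (mu P X N) i c.
Proof. by rewrite rclass_set (rep mX hid hprod N0 (dep_rclass (i := i) c)). Qed.

Lemma rclass_meas i c : measurable [set w | rclass N c (Ssum X i w)].
Proof. by rewrite rclass_set; apply: (rep_meas mX hid hprod N0 (dep_rclass (i := i) c)). Qed.

Lemma E_set (x : 'I_N) :
  [set w | exists n : nat, [/\ (1 <= n)%N, (n <= N)%N &
                 Rn X n (x, w) = (y n %% N%:Z)%Z]] =
  [set w | [exists n : 'I_N, hb N y n.+1 (x : nat)%:Z (Zf X N w)]].
Proof.
have key n w : (Rn X n (x, w) = (y n %% N%:Z)%Z) <-> hb N y n (x : nat)%:Z (Zf X N w).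
  have hab : (N%:Z %| ((x : nat)%:Z + Ssum X n w) - ((x : nat)%:Z + Ssm n (Zf X N w)))%Z.
    have -> : (x : nat)%:Z + Ssum X n w - ((x : nat)%:Z + Ssm n (Zf X N w)) =
                 Ssum X n w - Ssm n (Zf X N w) by ring.
    exact: Ssum_Ssm.
  rewrite /Rn /hb /=; split.
    by move=> /eqP; rewrite eqz_mod_dvd (dvd_swap (y n) hab).
  by move=> h; apply/eqP; rewrite eqz_mod_dvd (dvd_swap (y n) hab).
apply/seteqP; split => w /=.
  move=> [n [n1 nN /key hn]]; apply/existsP.
  have nN' : (n.-1 < N)%N by rewrite prednK.
  by exists (Ordinal nN'); rewrite /= prednK.
move=> /existsP [n hn]; exists n.+1; split; [by []|exact: (ltn_ord n)|].
exact/key.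
Qed.
End Final2.

Unset Implicit Arguments.

Theorem proposition3 (d : measure_display) (T : measurableType d) (R : realType)
  (P : probability T R) (X : nat -> T -> int) (N : nat) (y : nat -> int) :
  iid_int P X ->
  (2 <= N)%N ->
  (forall n : nat, (1 <= n)%N -> (n <= N - 1)%N -> `|y n - y n.+1| <= 1) ->
  let E := [set xw : 'I_N * T |
              exists n : nat, [/\ (1 <= n)%N, (n <= N)%N &
                 Rn X n xw = (y n %% N%:Z)%Z]] in
  1 / (\sum_(i < N) pN P X N i) <= PR P E /\
  PR P E <= 2 / (\sum_(i < N) qN P X N i).
Proof.
move=> [mX hid hprod] N2 ylip E.
have N0 : (0 < N)%N by exact: ltnW.
pose m := mu P X N.
have mu0 : forall a : 'I_N, 0 <= m (a : nat)%:Z by move=> a; exact: mu_ge0.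
have mu1 : \sum_(a < N) m (a : nat)%:Z = 1 by exact: (mu_sum P mX N0).
have ePR : PR P E = Vv N m y.
  rewrite /PR /Vv; congr (_ * _); apply: eq_bigr => x _.
  have -> : [set w | E (x, w)] = [set w | [exists n : 'I_N, hb N y n.+1 (x : nat)%:Z (Zf X N w)]].
    by rewrite -E_set.
  apply: (rep mX hid hprod N0) => f g h; apply: eq_existsb => n.
  apply: (@hb_dep N y n.+1 (x : nat)%:Z f g) => j jn; apply: h.
  exact: leq_trans jn (ltn_ord n).
have gg00' c : `|c| <= 0 -> gg N m 0 c = 1.
  by rewrite normr_le0 => /eqP ->; exact: gg00.
have hp : forall i c, `|c| <= i%:Z -> gg N m i c <= pN P X N i.
  move=> i c hc; rewrite /pN; case: eqP => [i0|i0].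
    by subst i; rewrite gg00'.
  rewrite -(gg_pr mX hid hprod N0); apply: ub_le_sup; last by exists c.
  exists 1 => v [c' _ <-]; apply: pr_le1; exact: (rclass_meas mX hid hprod N0).
have hq : forall i c, `|c| <= i%:Z -> qN P X N i <= gg N m i c.
  move=> i c hc; rewrite /qN; case: eqP => [i0|i0].
    by subst i; rewrite gg00'.
  rewrite -(gg_pr mX hid hprod N0); apply: ge_inf; last by exists c.
  exists 0 => v [c' _ <-]; exact: pr_ge0.
have qq0 : forall i, 0 <= qN P X N i.
  move=> i; rewrite /qN; case: eqP => // _.
  apply: lb_le_inf; first by exists (pr P [set w | rclass N 0 (Ssum X i w)]), 0; rewrite ?normr0.
  by move=> v [c' _ <-]; exact: pr_ge0.
have qq00 : qN P X N 0 = 1 by rewrite /qN.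
rewrite ePR; exact: (core_thm N0 mu0 mu1 ylip hp hq qq0 qq00).
Qed.
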